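(* Let $n\ge 2$, let $c_1,\dots,c_n\ge 2$ be integers, let $d$ be prime, and let $f:\mathbb{Z}_{c_1}\times\cdots\times\mathbb{Z}_{c_n}\to\mathbb{Z}_d$ be any function. Then the distribution $$p(\mathbf{m}|\mathbf{s})=\begin{cases} d^{1-n} & \text{if } \sum_{j=1}^n m_j\equiv f(\mathbf{s}) \pmod d,\\ 0&\text{otherwise},\end{cases}$$ is non-signaling and satisfies $p\big(\sum_j m_j\equiv f(\mathbf{s})\,\big|\,\mathbf{s}\big)=1$ for every $\mathbf{s}$. Moreover, it is the unique non-signaling distribution $p(\mathbf{m}|\mathbf{s})$ satisfying $p\big(\sum_j m_j\equiv f(\mathbf{s})\,\big|\,\mathbf{s}\big)=1$ for all $\mathbf{s}$ if and only if $f$ is not bi-partite linear.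
   Context: A conditional distribution $p(\mathbf{m}|\mathbf{s})$ with $\mathbf{m}\in\mathbb{Z}_d^n$, $\mathbf{s}\in\prod_j\mathbb{Z}_{c_j}$ (nonnegative, summing to 1 over $\mathbf{m}$ for each $\mathbf{s}$) is non-signaling if for every subset $S\subseteq\{1,\dots,n\}$ the marginal distribution of the outcomes $(m_j)_{j\in S}$ depends only on $(s_j)_{j\in S}$. A bipartition $\{A,B\}$ of $\{1,\dots,n\}$ is a division into two disjoint non-empty sets with $A\cup B=\{1,\dots,n\}$. The function $f$ is bi-partite linear if there exists a bipartition $\{A,B\}$ and functions $f^A$ of $\mathbf{s}^A=(s_j)_{j\in A}$ and $f^B$ of $\mathbf{s}^B=(s_j)_{j\in B}$, valued in $\mathbb{Z}_d$, with $f(\mathbf{s})=f^A(\mathbf{s}^A)+f^B(\mathbf{s}^B)$ (mod $d$) for all $\mathbf{s}$. *)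

(* Defs.v *)
From HB Require Import structures.
From mathcomp Require Import all_boot all_order all_algebra.
Set Implicit Arguments. Unset Strict Implicit. Unset Printing Implicit Defensive.
Import Order.TTheory GRing.Theory Num.Theory.
Local Open Scope ring_scope.

Definition inputs (n : nat) (c : 'I_n -> nat) :=
  {dffun forall j : 'I_n, 'I_(c j)}.

Definition outputs (n d : nat) := {ffun 'I_n -> 'Z_d}.

Definition is_cond_dist (R : realFieldType) (n d : nat) (c : 'I_n -> nat)
  (p : outputs n d -> inputs c -> R) : Prop :=
  (forall m s, 0 <= p m s) /\ (forall s, \sum_(m : outputs n d) p m s = 1).

(* The marginal probability of
   the outcome pattern a|_S is the sum of p m s over the m agreeing with a on S. *)
Definition non_signaling (R : realFieldType) (n d : nat) (c : 'I_n -> nat)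
  (p : outputs n d -> inputs c -> R) : Prop :=
  forall (S : {set 'I_n}) (s s' : inputs c),
    (forall j, j \in S -> s j = s' j) ->
    forall a : outputs n d,
      \sum_(m : outputs n d | [forall j in S, m j == a j]) p m s
      = \sum_(m : outputs n d | [forall j in S, m j == a j]) p m s'.

Definition prob_sum_eq (R : realFieldType) (n d : nat) (c : 'I_n -> nat)
  (f : inputs c -> 'Z_d) (p : outputs n d -> inputs c -> R) (s : inputs c) : R :=
  \sum_(m : outputs n d | \sum_(j < n) m j == f s) p m s.

Definition depends_only_on (n : nat) (c : 'I_n -> nat) (T : Type)
  (A : {set 'I_n}) (g : inputs c -> T) : Prop :=
  forall s s' : inputs c, (forall j, j \in A -> s j = s' j) -> g s = g s'.

Definition bipartite_linear (n d : nat) (c : 'I_n -> nat) (f : inputs c -> 'Z_d) : Prop :=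
  exists A : {set 'I_n}, [/\ A != set0, ~: A != set0 &
    exists fA fB : inputs c -> 'Z_d,
      [/\ depends_only_on A fA, depends_only_on (~: A) fB &
          forall s, f s = fA s + fB s]].

Definition pf (R : realFieldType) (n d : nat) (c : 'I_n -> nat) (f : inputs c -> 'Z_d)
  (m : outputs n d) (s : inputs c) : R :=
  if \sum_(j < n) m j == f s then ((d%:R : R) ^+ n.-1)^-1 else 0.

(* Main.v *)
Require Import Defs.
From HB Require Import structures.
From mathcomp Require Import all_boot all_order all_algebra.
From mathcomp Require Import ring.
From Stdlib Require ClassicalEpsilon.
Set Implicit Arguments. Unset Strict Implicit. Unset Printing Implicit Defensive.
Import Order.TTheory GRing.Theory Num.Theory.
Local Open Scope ring_scope.

Section Gen.
Variable (n : nat) (c : 'I_n -> nat) (d : nat).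

Definition mix (X : {set 'I_n}) (s x : inputs c) : inputs c :=
  [ffun k : 'I_n => if k \in X then x k else s k].

Lemma mixE X s x k : mix X s x k = if k \in X then x k else s k.
Proof. by rewrite ffunE. Qed.

Definition diff1 (s s' : inputs c) (i : 'I_n) := forall k, k != i -> s k = s' k.

Lemma L0 (X : {set 'I_n}) (phi : inputs c -> Prop) :
  (forall (s s' : inputs c) i, i \in X -> diff1 s s' i -> phi s -> phi s') ->
  forall s s' : inputs c, (forall k, k \notin X -> s k = s' k) -> phi s -> phi s'.
Proof.
move=> H s s' Hs.
suff: forall N (s0 : inputs c), (#|[set k | s0 k != s' k]| <= N)%N ->
   (forall k, k \notin X -> s0 k = s' k) -> phi s0 -> phi s'.
  by move/(_ _ s (leqnn _) Hs).
elim=> [|N IH] s0 hN hX hp.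
  have -> : s' = s0 => //.
  apply/ffunP=> k; apply/eqP; apply: contraT => hk.
  move: hN; rewrite leqn0 cards_eq0 => /eqP E.
  have : k \in [set k | s0 k != s' k] by rewrite inE eq_sym.
  by rewrite E inE.
case: (pickP [pred k | s0 k != s' k]) => [j /= hj | none]; last first.
  have -> : s' = s0 => //.
  by apply/ffunP=> k; move: (none k) => /= /negbFE/eqP.
have jX : j \in X by apply: contraT => /hX e; rewrite e eqxx in hj.
set s1 := mix [set j] s0 s'.
have h1 : phi s1.
  apply: (H s0 s1 j jX) => // k hk; by rewrite mixE inE (negbTE hk).
apply: (IH s1) => //; last first.
  by move=> k hk; rewrite mixE inE; case: (k =P j) => // _; exact: hX.
apply: (@leq_trans #|[set k | s0 k != s' k] :\ j|).
  apply: subset_leq_card; apply/subsetP => k; rewrite !inE mixE inE.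
  case: (k =P j) => [->|nkj]; first by rewrite eqxx.
  by move=> ->; rewrite andbT; apply/eqP.
move: hN; rewrite (cardsD1 j) inE hj /= add1n ltnS => //.
Qed.


Definition e (i : 'I_n) (t : 'Z_d) : outputs n d := [ffun j => if j == i then t else 0].
Definition tot (m : outputs n d) : 'Z_d := \sum_(j < n) m j.

Lemma tot_add (m v : outputs n d) : tot (m + v) = tot m + tot v.
Proof. by rewrite /tot -big_split; apply: eq_bigr => j _; rewrite ffunE. Qed.

Lemma tot_opp (m : outputs n d) : tot (- m) = - tot m.
Proof. by rewrite /tot -sumrN; apply: eq_bigr => j _; rewrite ffunE. Qed.

Lemma tot_e i t : tot (e i t) = t.
Proof.
rewrite /tot (bigD1 i) //= big1 ?addr0 ?ffunE ?eqxx // => j hj.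
by rewrite ffunE (negbTE hj).
Qed.

Lemma eD i t u : e i t + e i u = e i (t + u).
Proof. by apply/ffunP=> j; rewrite !ffunE; case: (j == i); rewrite ?addr0. Qed.

Lemma eN i t : - e i t = e i (- t).
Proof. by apply/ffunP=> j; rewrite !ffunE; case: (j == i); rewrite ?oppr0. Qed.

Lemma eMn i t k : e i t *+ k = e i (t *+ k).
Proof. by apply/ffunP=> j; rewrite ffunMnE !ffunE; case: (j == i); rewrite ?mul0rn. Qed.

Lemma e0 i : e i 0 = 0.
Proof. by apply/ffunP=> j; rewrite !ffunE; case: (j == i). Qed.

Lemma agree_off (m m' : outputs n d) i :
  (forall j, j != i -> m' j = m j) -> m' = m + e i (m' i - m i).
Proof.
move=> h; apply/ffunP=> j; rewrite !ffunE.
case: (j =P i) => [->|/eqP nj]; first by rewrite addrC subrK.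
by rewrite addr0 h.
Qed.

End Gen.

Lemma Zd_inv (d : nat) (hd : prime d) (D : 'Z_d) : D != 0 -> exists k, D *+ k = 1.
Proof.
move=> hD.
have d1 : (1 < d)%N := prime_gt1 hd.
have u : D \is a GRing.unit.
  rewrite -(natr_Zp D) unitZpE // prime_coprime //.
  apply/negP => /(dvdn_leq _) h.
  have Dpos : (0 < val D)%N.
    by rewrite lt0n; apply: contra hD => /eqP h0; apply/eqP; apply: val_inj.
  have := h Dpos; have : (val D < d)%N.
    by apply: (leq_trans (ltn_ord D)); rewrite Zp_cast.
  by move=> a b; move: (leq_trans a b); rewrite ltnn.
by exists (val (D^-1)); rewrite -mulr_natr natr_Zp mulrV.
Qed.

Section Tele.
Variables (n : nat) (c : 'I_n -> nat) (d : nat) (f : inputs c -> 'Z_d) (A : {set 'I_n}).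
Hypothesis HD : forall (k l : 'I_n) (s si sj sij : inputs c), k \in A -> l \notin A ->
  diff1 s si k -> diff1 si sij l -> diff1 s sj l -> diff1 sj sij k ->
  f sij - f si - f sj + f s = 0.

Lemma diff1_mix (u x : inputs c) l : diff1 u (mix [set l] u x) l.
Proof. by move=> q hq; rewrite mixE inE (negbTE hq). Qed.

Lemma psi_inv l (x : inputs c) : l \notin A -> forall u u' : inputs c,
  (forall q, q \notin A -> u q = u' q) ->
  f (mix [set l] u x) - f u = f (mix [set l] u' x) - f u'.
Proof.
move=> lA u u' hu.
apply: (@L0 _ _ A (fun w => f (mix [set l] u x) - f u = f (mix [set l] w x) - f w) _ u u') => //.
move=> w w' k kA hw ->.
have kl : k != l by apply: contraNneq lA => <-.
have H4 : diff1 (mix [set l] w x) (mix [set l] w' x) k.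
  move=> q hq; rewrite !mixE inE; case: (q =P l) => // _; exact: hw.
have H := HD kA lA hw (@diff1_mix w' x l) (@diff1_mix w x l) H4.
by rewrite -[LHS]addr0 -H; ring.
Qed.

Lemma tele (s0 s : inputs c) :
  f s = f (mix (~: A) s s0) + (f (mix A s s0) - f s0).
Proof.
have HQ : f s - f (mix A s s0) = f (mix (~: A) s s0) - f (mix A (mix (~: A) s s0) s0).
  apply: (@L0 _ _ (~: A) (fun w => f s - f (mix A s s0) = f w - f (mix A w s0)) _ s) => //.
    move=> w w' l; rewrite inE => lA hw ->.
    have E1 : w' = mix [set l] w w'.
      apply/ffunP => q; rewrite mixE inE; case: (q =P l) => [-> //|/eqP hq].
      by rewrite hw.
    have E2 : mix A w' s0 = mix [set l] (mix A w s0) w'.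
      apply/ffunP => q; rewrite !mixE inE; case: (q =P l) => [->|/eqP hq].
        by rewrite (negbTE lA).
      by case: (q \in A) => //; rewrite hw.
    have hag : forall q, q \notin A -> w q = mix A w s0 q.
      by move=> q hq; rewrite mixE (negbTE hq).
    have H := @psi_inv l w' lA w (mix A w s0) hag.
    rewrite -E1 -E2 in H.
    have H' : (f w' - f w) - (f (mix A w' s0) - f (mix A w s0)) = 0 by rewrite H subrr.
    by rewrite -[LHS]addr0 -H'; ring.
  by move=> k; rewrite mixE !inE; case: (k \in A).
have E3 : mix A (mix (~: A) s s0) s0 = s0.
  apply/ffunP => q; rewrite !mixE inE.
  by case: (q \in A).
rewrite E3 in HQ.
have H' : (f s - f (mix A s s0)) - (f (mix (~: A) s s0) - f s0) = 0 by rewrite HQ subrr.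
by rewrite -[LHS]subr0 -H'; ring.
Qed.

End Tele.

Section Count.
Variables (R : realFieldType) (n d : nat).

Lemma fiber_eq (P Q : pred (outputs n d)) (v : outputs n d) :
  (forall m, P (m + v) = Q m) ->
  \sum_(m | P m) (1 : R) = \sum_(m | Q m) 1.
Proof.
move=> h; rewrite (reindex_inj (addIr v)) /=.
by apply: eq_bigl => m; rewrite h.
Qed.

Lemma count_fiber (J : finType) (g : outputs n d -> J) (P : pred (outputs n d)) :
  (forall x y, exists v, forall m,
      (P (m + v) && (g (m + v) == x)) = (P m && (g m == y))) ->
  forall x, (#|J|%:R) * \sum_(m | P m && (g m == x)) (1 : R) = \sum_(m | P m) 1.
Proof.
move=> h x.
rewrite [RHS](partition_big g predT) //=.
rewrite [RHS](eq_bigr (fun _ => \sum_(m | P m && (g m == x)) (1 : R))); last first.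
  move=> y _; case: (h x y) => v hv; apply/esym/(fiber_eq (v := v)) => m /=.
  exact: hv.
rewrite [RHS]sumr_const mulr_natl; congr (_ *+ _); exact: eq_card.
Qed.

Lemma count_all (hd1 : (1 < d)%N) : \sum_(m : outputs n d) (1 : R) = ((d ^ n)%N)%:R.
Proof.
by rewrite sumr_const card_ffun !card_ord Zp_cast.
Qed.

Lemma shift_eq (a x y : 'Z_d) : (a + (x - y) == x) = (a == y).
Proof.
rewrite (can2_eq (addrK (x - y)) (subrK (x - y))).
by rewrite opprB addrCA subrr addr0.
Qed.

Lemma count_tot (n0 : (0 < n)%N) (hd1 : (1 < d)%N) (x : 'Z_d) :
  \sum_(m : outputs n d | tot m == x) (1 : R) = (d%:R) ^+ n.-1.
Proof.
have := @count_fiber _ (@tot n d) predT _ x.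
have hZ : #|'Z_d| = d by rewrite card_ord Zp_cast.
rewrite /= count_all // hZ.
case: n n0 => // n' n0 /=; rewrite natrX exprS => h.
apply: (mulfI (x := d%:R)); first by rewrite pnatr_eq0 -lt0n ltnW.
rewrite h //.
move=> a b; exists (e (Ordinal n0) (a - b)) => m /=.
by rewrite tot_add tot_e shift_eq.
Qed.

End Count.

Section Hard.
Variables (R : realFieldType) (n : nat) (c : 'I_n -> nat) (d : nat)
  (f : inputs c -> 'Z_d) (p : outputs n d -> inputs c -> R).
Hypotheses (hp : is_cond_dist p) (hns : non_signaling p)
  (hps : forall s, prob_sum_eq f p s = 1).

Lemma p_zero (m : outputs n d) (s : inputs c) : tot m != f s -> p m s = 0.
Proof.
move=> hm; have := hps s; rewrite /prob_sum_eq.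
have := hp.2 s; rewrite (bigID (fun m : outputs n d => \sum_(j < n) m j == f s)) /= => H1 H2.
move: H1; rewrite H2 -{2}(addr0 1) => /addrI H.
apply: (psumr_eq0P _ H) => //; move=> i _; exact: hp.1.
Qed.

Lemma marg1 (i : 'I_n) (m : outputs n d) (s : inputs c) :
  \sum_(m2 : outputs n d | [forall j in ~: [set i], m2 j == m j]) p m2 s
  = p (m + e i (f s - tot m)) s.
Proof.
set m0 := m + e i (f s - tot m).
have hm0 : tot m0 = f s by rewrite tot_add tot_e addrC subrK.
have ag0 : [forall j in ~: [set i], m0 j == m j].
  by apply/forallP => j; apply/implyP; rewrite !inE => hj; rewrite !ffunE (negbTE hj) addr0.
rewrite (bigD1 m0) //= big1 ?addr0 // => m2 /andP [ag neq]; apply: p_zero.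
apply: contra neq => /eqP ht; apply/eqP.
have h2 : forall j, j != i -> m2 j = m0 j.
  move=> j hj; move/forallP: ag => /(_ j); move/forallP: ag0 => /(_ j).
  by rewrite !inE hj /= => /eqP -> /eqP ->.
have E := agree_off h2.
move: ht; rewrite E tot_add tot_e hm0 => /eqP.
rewrite -subr_eq0 (addrC (f s)) addrK => /eqP D0.
by rewrite D0 e0 addr0.
Qed.

Lemma shift (s s' : inputs c) (i : 'I_n) : diff1 s s' i ->
  forall m, p m s' = p (m - e i (f s' - f s)) s.
Proof.
move=> hd m.
have hS : forall j, j \in ~: [set i] -> s j = s' j by move=> j; rewrite !inE => /hd.
have := hns hS m; rewrite !marg1 => H.
case: (tot m =P f s') => [ht | /eqP hn].
  by rewrite ht subrr e0 addr0 in H; rewrite -H eN opprB.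
rewrite p_zero // p_zero //.
rewrite tot_add tot_opp tot_e; apply: contra hn => /eqP h; apply/eqP.
by rewrite -(subrK (f s' - f s) (tot m)) h addrC subrK.
Qed.

Definition invs (v : outputs n d) (s : inputs c) := forall m, p (m + v) s = p m s.
Definition inv (v : outputs n d) := forall s, invs v s.

Lemma invs_all (v : outputs n d) (s : inputs c) : invs v s -> inv v.
Proof.
move=> h s'; apply: (@L0 _ _ setT (invs v) _ s s') => // [s1 s2 i _ h12 hs1 m|k].
  by rewrite (shift h12) (shift h12) addrAC hs1.
by rewrite inE.
Qed.

Lemma inv0 : inv 0. Proof. by move=> s m; rewrite addr0. Qed.
Lemma invD (v w : outputs n d) : inv v -> inv w -> inv (v + w).
Proof. by move=> hv hw s m; rewrite addrA hw hv. Qed.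
Lemma invN (v : outputs n d) : inv v -> inv (- v).
Proof. by move=> hv s m; rewrite -(hv s (m - v)) subrK. Qed.
Lemma invMn (v : outputs n d) k : inv v -> inv (v *+ k).
Proof. by move=> hv; elim: k => [|k IH]; [rewrite mulr0n; exact: inv0 | rewrite mulrS; exact: invD]. Qed.

Lemma pair_inv (i j : 'I_n) (s si sj sij : inputs c) :
  diff1 s si i -> diff1 si sij j -> diff1 s sj j -> diff1 sj sij i ->
  inv (e i (f sij - f si - f sj + f s) - e j (f sij - f si - f sj + f s)).
Proof.
move=> h1 h2 h3 h4; apply: (@invs_all _ s) => w.
have H : forall m, p (m - e j (f sij - f si) - e i (f si - f s)) s
                 = p (m - e i (f sij - f sj) - e j (f sj - f s)) s.
  move=> m; by rewrite -(shift h1) -(shift h2) -(shift h3) -(shift h4).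
have := H (w + e j (f sj - f s) + e i (f sij - f sj)).
rewrite addrK addrK => <-; congr p.
apply/ffunP => k; rewrite !ffunE.
by case: (k == i); case: (k == j); ring.
Qed.

Lemma inv_sum (I : finType) (F : I -> outputs n d) :
  (forall i, inv (F i)) -> inv (\sum_i F i).
Proof.
move=> h; apply: (big_ind (fun v => inv v)) => //; [exact: inv0 | exact: invD].
Qed.

Lemma uniform (n0 : (0 < n)%N) (hd : prime d) :
  (forall i j, inv (e i 1 - e j 1)) -> forall m s, p m s = pf R f m s.
Proof.
move=> Hall.
have d1 : (1 < d)%N := prime_gt1 hd.
set i0 := Ordinal n0.
have hinv : forall i j t, inv (e i t - e j t).
  move=> i j t; have := invMn (val t) (Hall i j).
  by rewrite mulrnBl !eMn natr_Zp.
have canon : forall m s, p m s = p (e i0 (tot m)) s.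
  move=> m s.
  have E : m = e i0 (tot m) + \sum_j (e j (m j) - e i0 (m j)).
    apply/ffunP => k; rewrite !ffunE sum_ffunE.
    rewrite (eq_bigr (fun j => (if k == j then m j else 0) - (if k == i0 then m j else 0))); last first.
      by move=> j _; rewrite !ffunE.
    rewrite sumrB (bigD1 k) //= eqxx big1 ?addr0; last by move=> j /negbTE; rewrite eq_sym => ->.
    case: (k == i0); last by rewrite big1 ?subr0 ?add0r.
    by rewrite /tot addrC subrK.
  by rewrite {1}E (inv_sum (fun j => hinv j i0 (m j))).
move=> m s; rewrite /pf -/(tot m).
case: eqP => [ht | /eqP hn]; last exact: p_zero.
have K : p (e i0 (f s)) s * (d%:R ^+ n.-1) = 1.
  apply: (etrans _ (hp.2 s)); rewrite -(count_tot R n0 d1 (f s)) mulr_sumr.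
  rewrite [RHS](bigID (fun m : outputs n d => tot m == f s)) /= [X in _ = _ + X]big1 ?addr0.
    by apply: eq_bigr => m' /eqP h; rewrite mulr1 (canon m' s) h.
  by move=> m' h; exact: p_zero.
have nz : (d%:R ^+ n.-1 : R) != 0.
  rewrite expf_eq0 pnatr_eq0 negb_and; apply/orP; right.
  by rewrite -lt0n ltnW.
by rewrite canon ht; apply: (mulIf nz); rewrite K mulVf.
Qed.

Lemma nonBL_unique (n0 : (0 < n)%N) (hd : prime d) (s0 : inputs c) :
  ~ bipartite_linear f -> forall m s, p m s = pf R f m s.
Proof.
move=> nBL; apply: uniform => // i j.
case: (ClassicalEpsilon.excluded_middle_informative (inv (e i 1 - e j 1))) => // nr.
exfalso; apply: nBL.
pose rb k := if ClassicalEpsilon.excluded_middle_informative (inv (e i 1 - e k 1)) then true else false.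
have rbP : forall k, rb k = true <-> inv (e i 1 - e k 1).
  by move=> k; rewrite /rb; case: ClassicalEpsilon.excluded_middle_informative.
set A := [set k | rb k].
have iA : i \in A by rewrite inE; apply/rbP; rewrite subrr; exact: inv0.
have jA : j \notin A by apply/negP; rewrite inE => /rbP.
have HD : forall (k l : 'I_n) (s si sj sij : inputs c), k \in A -> l \notin A ->
  diff1 s si k -> diff1 si sij l -> diff1 s sj l -> diff1 sj sij k ->
  f sij - f si - f sj + f s = 0.
  move=> k l s si sj sij kA lA h1 h2 h3 h4.
  case: (eqVneq (f sij - f si - f sj + f s) 0) => // nz; exfalso.
  have [q hq] := Zd_inv hd nz.
  have := invMn q (pair_inv h1 h2 h3 h4); rewrite mulrnBl !eMn hq => hkl.
  move: lA; rewrite inE => /negP; apply; apply/rbP.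
  move: kA; rewrite inE => /rbP hik.
  by have := invD hik hkl; rewrite addrA subrK.
exists A; split.
- by apply/set0Pn; exists i.
- by apply/set0Pn; exists j; rewrite inE.
exists (fun s => f (mix (~: A) s s0)), (fun s => f (mix A s s0) - f s0); split.
- move=> s s' h; congr f; apply/ffunP => q; rewrite !mixE in_setC.
  by case E: (q \in A) => //=; exact: h.
- move=> s s' h; congr (f _ - _); apply/ffunP => q; rewrite !mixE.
  by case E: (q \in A) => //=; apply: h; rewrite in_setC E.
- move=> s; exact: tele.
Qed.

End Hard.

Lemma sum_ifK (R : realFieldType) (T : finType) (Q P : pred T) (K : R) :
  \sum_(m | Q m) (if P m then K else 0) = K * \sum_(m | Q m && P m) 1.
Proof. by rewrite -big_mkcondr mulr_sumr; apply: eq_bigr => m _; rewrite mulr1. Qed.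

Section Easy.
Variables (R : realFieldType) (n : nat) (c : 'I_n -> nat) (d : nat) (f : inputs c -> 'Z_d).
Hypotheses (n0 : (0 < n)%N) (hd1 : (1 < d)%N).

Let K : R := ((d%:R : R) ^+ n.-1)^-1.

Lemma Knz : (d%:R : R) ^+ n.-1 != 0.
Proof.
rewrite expf_eq0 pnatr_eq0 negb_and; apply/orP; right.
by rewrite -lt0n ltnW.
Qed.

Lemma pf_sum s : \sum_(m : outputs n d) pf R f m s = 1.
Proof.
rewrite /pf (sum_ifK predT (fun m : outputs n d => tot m == f s)) /=.
by rewrite count_tot // mulVf // Knz.
Qed.

Lemma pf_cond : is_cond_dist (pf R f).
Proof.
split; last exact: pf_sum.
move=> m s; rewrite /pf; case: ifP => // _.
by rewrite invr_ge0 exprn_ge0 // ler0n.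
Qed.

Lemma pf_prob s : prob_sum_eq f (pf R f) s = 1.
Proof.
rewrite /prob_sum_eq -[RHS](pf_sum s) [RHS](bigID (fun m : outputs n d => tot m == f s)) /=.
rewrite [X in _ = _ + X]big1 ?addr0 // => m hm.
by rewrite /pf (negbTE hm).
Qed.

Lemma pf_ns : non_signaling (pf R f).
Proof.
move=> S s s' h a; rewrite /pf !sum_ifK; congr (_ * _).
case: (boolP ([set: 'I_n] \subset S)) => [sT | /subsetPn [j0 _ j0S]].
  have -> : s = s' by apply/ffunP => j; apply: h; apply: (subsetP sT); rewrite inE.
  by [].
apply: (@fiber_eq R _ _ _ _ (e j0 (f s - f s'))) => m /=.
set v := e j0 (f s - f s').
have -> : [forall j in S, (m + v) j == a j] = [forall j in S, m j == a j].
  apply/forallP/forallP => H j; move: (H j); rewrite !ffunE;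
  case: (boolP (j \in S)) => //= jS;
  (have -> : (j == j0) = false by apply/negP => /eqP E; rewrite -E jS in j0S);
  by rewrite addr0.
rewrite (_ : \sum_(j < n) (m + v) j = tot (m + v)) // -/(tot m).
by rewrite tot_add tot_e shift_eq.
Qed.

End Easy.

Lemma agree_shift n d (S : {set 'I_n}) (a m : outputs n d) j0 t : j0 \notin S ->
  [forall j in S, (m + e j0 t) j == a j] = [forall j in S, m j == a j].
Proof.
move=> j0S.
apply/forallP/forallP => H j; move: (H j); rewrite !ffunE;
case: (boolP (j \in S)) => //= jS;
(have -> : (j == j0) = false by apply/negP => /eqP E; rewrite -E jS in j0S);
by rewrite addr0.
Qed.

Definition totA n d (X : {set 'I_n}) (m : outputs n d) : 'Z_d := \sum_(j in X) m j.

Lemma totA_add n d X (m v : outputs n d) : totA X (m + v) = totA X m + totA X v.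
Proof. by rewrite /totA -big_split; apply: eq_bigr => j _; rewrite ffunE. Qed.

Lemma totA_e n d X (i : 'I_n) (t : 'Z_d) : totA X (e i t) = if i \in X then t else 0.
Proof.
rewrite /totA; case: (boolP (i \in X)) => hi.
  rewrite (bigD1 i) //= big1 ?addr0 ?ffunE ?eqxx // => j /andP [_ hj].
  by rewrite ffunE (negbTE hj).
rewrite big1 // => j hj; rewrite ffunE; case: (j =P i) => // E.
by rewrite -E hj in hi.
Qed.

Lemma tot_split n d (A : {set 'I_n}) (m : outputs n d) : tot m = totA A m + totA (~: A) m.
Proof.
rewrite /tot /totA (bigID (fun j => j \in A)) /=; congr (_ + _).
by apply: eq_bigl => j; rewrite in_setC.
Qed.

Section BL.
Variables (R : realFieldType) (n : nat) (c : 'I_n -> nat) (d : nat) (f : inputs c -> 'Z_d).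
Hypotheses (hn : (2 <= n)%N) (hd1 : (1 < d)%N).
Variables (A : {set 'I_n}) (fA fB : inputs c -> 'Z_d).
Hypotheses (An : A != set0) (Bn : ~: A != set0) (depA : depends_only_on A fA)
  (depB : depends_only_on (~: A) fB) (hf : forall s, f s = fA s + fB s).

Definition g (m : outputs n d) : 'Z_d * 'Z_d := (totA A m, totA (~: A) m).
Definition K2 : R := ((d%:R : R) ^+ (n - 2))^-1.
Definition q (m : outputs n d) (s : inputs c) : R := if g m == (fA s, fB s) then K2 else 0.

Lemma g_shiftA (m : outputs n d) i t x1 x2 : i \in A ->
  (g (m + e i t) == (x1 + t, x2)) = (g m == (x1, x2)).
Proof.
move=> iA; rewrite /g !xpair_eqE !totA_add !totA_e in_setC iA /= addr0.
congr (_ && _); apply/eqP/eqP; [exact: addIr | by move=> ->].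
Qed.

Lemma g_shiftB (m : outputs n d) j t x1 x2 : j \notin A ->
  (g (m + e j t) == (x1, x2 + t)) = (g m == (x1, x2)).
Proof.
move=> jA; rewrite /g !xpair_eqE !totA_add !totA_e in_setC (negbTE jA) /= addr0.
congr (_ && _); apply/eqP/eqP; [exact: addIr | by move=> ->].
Qed.

Lemma K2nz : (d%:R : R) ^+ (n - 2) != 0.
Proof.
rewrite expf_eq0 pnatr_eq0 negb_and; apply/orP; right.
by rewrite -lt0n ltnW.
Qed.

Lemma count_g x : \sum_(m : outputs n d | g m == x) (1 : R) = (d%:R) ^+ (n - 2).
Proof.
have [i iA] := set0Pn _ An; have [j jB] := set0Pn _ Bn.
have jA : j \notin A by rewrite -in_setC.
have := @count_fiber R n d _ g predT _ x.
have hZ : #|{: 'Z_d * 'Z_d}| = (d * d)%N by rewrite card_prod card_ord Zp_cast.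
rewrite /= count_all // hZ.
have En : (d ^ n = d * d * d ^ (n - 2))%N by rewrite mulnn -expnD subnKC.
rewrite En !natrM natrX => h.
apply: (mulfI (x := d%:R * d%:R)).
  by rewrite mulf_eq0 negb_or pnatr_eq0 -lt0n ltnW.
rewrite h //.
case=> x1 x2 [y1 y2]; exists (e i (x1 - y1) + e j (x2 - y2)) => m /=.
have -> : (x1, x2) = (y1 + (x1 - y1), y2 + (x2 - y2)) by rewrite !(addrC _ (_ - _)) !subrK.
by rewrite addrA g_shiftB // g_shiftA.
Qed.

Lemma q_sum s : \sum_(m : outputs n d) q m s = 1.
Proof.
rewrite /q (sum_ifK predT (fun m : outputs n d => g m == (fA s, fB s))) /=.
by rewrite count_g mulVf // K2nz.
Qed.

Lemma q_cond : is_cond_dist q.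
Proof.
split; last exact: q_sum.
move=> m s; rewrite /q; case: ifP => // _.
by rewrite invr_ge0 exprn_ge0 // ler0n.
Qed.

Lemma q_prob s : prob_sum_eq f q s = 1.
Proof.
rewrite /prob_sum_eq -[RHS](q_sum s) [RHS](bigID (fun m : outputs n d => tot m == f s)) /=.
rewrite [X in _ = _ + X]big1 ?addr0 // => m hm.
rewrite /q; case: ifP => // /eqP [h1 h2].
by move: hm; rewrite (@tot_split _ _ A m) h1 h2 hf eqxx.
Qed.

Lemma q_ns : non_signaling q.
Proof.
move=> S s s' h a; rewrite /q !sum_ifK; congr (_ * _).
set C := fun x => \sum_(m : outputs n d | [forall j in S, m j == a j] && (g m == x)) (1 : R).
rewrite -/(C _) -/(C _).
have stepA : forall y, C (fA s, y) = C (fA s', y).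
  move=> y; case: (boolP (A \subset S)) => [sA | /subsetPn [i iA iS]].
    by rewrite (depA (s' := s')) // => j /(subsetP sA); exact: h.
  apply: (@fiber_eq R _ _ _ _ (e i (fA s - fA s'))) => m /=.
  rewrite agree_shift //; congr (_ && _).
  have -> : (fA s, y) = (fA s' + (fA s - fA s'), y) by rewrite addrC subrK.
  by rewrite g_shiftA.
have stepB : forall x, C (x, fB s) = C (x, fB s').
  move=> x; case: (boolP (~: A \subset S)) => [sA | /subsetPn [j jA jS]].
    by rewrite (depB (s' := s')) // => k /(subsetP sA); exact: h.
  apply: (@fiber_eq R _ _ _ _ (e j (fB s - fB s'))) => m /=.
  rewrite agree_shift //; congr (_ && _).
  have -> : (x, fB s) = (x, fB s' + (fB s - fB s')) by rewrite addrC subrK.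
  by rewrite g_shiftB // -in_setC.
by rewrite stepA stepB.
Qed.

Lemma q_differs (s0 : inputs c) : exists m, q m s0 != pf R f m s0.
Proof.
case: (pickP (fun m : outputs n d => g m == (fA s0, fB s0))) => [m hm | none]; last first.
  have := count_g (fA s0, fB s0); rewrite big_pred0 // => /esym/eqP.
  by rewrite (negbTE K2nz).
exists m; rewrite /q hm /pf -/(tot m) (@tot_split _ _ A m).
move/eqP: hm => [-> ->]; rewrite -hf eqxx /K2.
apply/negP => /eqP /invr_inj.
have En : n.-1 = (n - 2).+1 by rewrite -subn1 -subSn // subSS subn1.
rewrite En exprS => /eqP; rewrite -subr_eq0 -{1}[_ ^+ (n - 2)]mul1r -mulrBl mulf_eq0.
rewrite (negbTE K2nz) orbF subr_eq0 eq_sym pnatr_eq1 => /eqP d1.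
by move: hd1; rewrite d1.
Qed.

End BL.

Unset Implicit Arguments. Set Strict Implicit. Set Printing Implicit Defensive.

Theorem theorem2 (R : realFieldType) (n : nat) (c : 'I_n -> nat) (d : nat)
  (hn : (2 <= n)%N) (hc : forall j, (2 <= c j)%N) (hd : prime d)
  (f : inputs c -> 'Z_d) :
  [/\ is_cond_dist (pf R f),
      non_signaling (pf R f),
      (forall s, prob_sum_eq f (pf R f) s = 1) &
      ((forall p : outputs n d -> inputs c -> R,
          is_cond_dist p -> non_signaling p ->
          (forall s, prob_sum_eq f p s = 1) ->
          forall m s, p m s = pf R f m s)
       <-> ~ bipartite_linear f)].
Proof.
have n0 : (0 < n)%N by apply: leq_trans hn.
have hd1 := prime_gt1 hd.
pose s0 : inputs c := [ffun j : 'I_n => (Ordinal (ltnW (hc j)) : 'I_(c j))].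
split; [exact: pf_cond | exact: pf_ns | exact: pf_prob |].
split.
  move=> U [A [An Bn [fA [fB [dA dB hf]]]]].
  have [m hm] := q_differs R hn hd1 An Bn hf s0.
  move/negP: hm; apply; apply/eqP.
  apply: U; [exact: q_cond | exact: q_ns | exact: q_prob].
move=> nBL p h1 h2 h3; exact: (nonBL_unique h1 h2 h3 n0 hd s0 nBL).
Qed.
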